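(* Let $(X,d)\in\mathfrak U$ (with $X\cap\operatorname{Sp}(X)=\varnothing$) and let $u,v,w$ be distinct internal nodes of the representing tree $T_X$ with labels $r_u,r_v,r_w\in\operatorname{Sp}(X)$. Then $v$ and $w$ are children of $u$ if and only if $$B_{r_u}=B_{r_v}\cup B_{r_w},$$ where $B_{r_u},B_{r_v},B_{r_w}$ are the balls in $\mathbf B_X$ of radii $r_u,r_v,r_w$ respectively.
   Context: $\operatorname{Sp}(X)=\{d(x,y):x\neq y\}$, $\operatorname{diam}X=\max d(x,y)$; $\mathfrak U$ is the class of finite ultrametric spaces $X$ with $|\operatorname{Sp}(X)|=|X|-1$. For $t\in X$, $B_r(t)=\{x:d(x,t)\le r\}$, $\operatorname{Sp}_t(X)=\{d(x,t):x\neq t\}$, and $\mathbf B_X=\{B_r(t):t\in X,\ r\in\operatorname{Sp}_t(X)\}$; for $X\in\mathfrak U$ and each $r\in\operatorname{Sp}(X)$ there is exactly one ball of radius $r$ in $\mathbf B_X$. The representing tree $T_X$ is the labelled rooted tree defined recursively: for $X=\{x\}$ it is a single node labelled $x$; for $|X|\ge2$ the root is labelled $\operatorname{diam}X$ and has one child for each class $X_i$ of the equivalence relation $x\sim y\iff d(x,y)<\operatorname{diam}X$, that child being labelled $x$ if $X_i=\{x\}$ (a leaf) and otherwise labelled $\operatorname{diam}X_i$ (an internal node) and carrying the recursively constructed tree for $X_i$. Children of a node are the adjacent nodes on the next level (farther from the root). *)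

(* Defs.v *)
From mathcomp Require Import all_boot all_order all_algebra.
From mathcomp Require Import reals.
Set Implicit Arguments. Unset Strict Implicit. Unset Printing Implicit Defensive.
Import Order.TTheory GRing.Theory Num.Theory.
Local Open Scope ring_scope.

Section UltraDefs.
Variables (R : realType) (X : finType) (d : X -> X -> R).

Definition ultrametric : Prop :=
  [/\ forall x y, 0 <= d x y,
      forall x y, d x y = 0 <-> x = y,
      forall x y, d x y = d y x &
      forall x y z, d x y <= Num.max (d x z) (d z y)].

Definition Sp : seq R :=
  undup [seq d p.1 p.2 | p <- enum [set: X * X] & p.1 != p.2].

Definition inU : Prop := size Sp = (#|X| - 1)%N.

(* diam S = max d(x,y), x,y in S (0 for empty / singletons) *)
Definition diam (S : {set X}) : R :=
  \big[Num.max/0]_(x in S) \big[Num.max/0]_(y in S) d x y.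

Definition ball (r : R) (t : X) : {set X} := [set x | d x t <= r].

Definition in_Sp_t (t : X) (r : R) : Prop := exists2 x, x != t & d x t = r.

Definition ballX (B : {set X}) (r : R) : Prop :=
  exists t, in_Sp_t t r /\ B = ball r t.

Definition is_class (S C : {set X}) : Prop :=
  exists2 x, x \in S & C = [set y in S | d x y < diam S].

(* nodes of the representing tree T_X, each node identified with the set of
   points (leaves) below it *)
Inductive rnode : {set X} -> Prop :=
| rnode_root : rnode [set: X]
| rnode_child S C : rnode S -> (1 < #|S|)%N -> is_class S C -> rnode C.

(* internal node (labelled diam S); leaves are the singleton nodes *)
Definition internal (S : {set X}) : Prop := rnode S /\ (1 < #|S|)%N.

Definition child (S C : {set X}) : Prop := internal S /\ is_class S C.

End UltraDefs.

(* Main.v *)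
Require Import Defs.
From mathcomp Require Import all_boot all_order all_algebra.
From mathcomp Require Import reals.
From mathcomp Require Import zify.
Set Implicit Arguments. Unset Strict Implicit. Unset Printing Implicit Defensive.
Import Order.TTheory GRing.Theory Num.Theory.
Local Open Scope ring_scope.

Section S.
Variables (R : realType) (X : finType) (d : X -> X -> R).
Hypothesis hU : ultrametric d.

Lemma card3 (x y z: X) : x != y -> y != z -> x != z -> (3 <= #|[set x; y; z]|)%N.
Proof. move=> xy yz xz. by rewrite -!setUA !cardsU1 cards1 !inE !negb_or xy xz yz. Qed.
Lemma card4 (x y z w: X) : x != y -> x != z -> x != w -> y != z -> y != w -> z != w -> (4 <= #|[set x; y; z; w]|)%N.
Proof. move=> h1 h2 h3 h4 h5 h6. by rewrite -!setUA !cardsU1 cards1 !inE !negb_or h1 h2 h3 h4 h5 h6. Qed.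

Lemma d0 x y : 0 <= d x y. Proof. by case: hU. Qed.
Lemma dxx x : d x x = 0. Proof. by case: hU => _ h _ _; apply/h. Qed.
Lemma dneq x y : x != y -> 0 < d x y.
Proof. move=> nxy; rewrite lt_def d0 andbT; apply: contra nxy => /eqP.
by case: hU => _ h _ _ /h ->. Qed.
Lemma dC x y : d x y = d y x. Proof. by case: hU. Qed.
Lemma dU x y z : d x y <= Num.max (d x z) (d z y). Proof. by case: hU. Qed.
Lemma dlt x y z c : d x z < c -> d z y < c -> d x y < c.
Proof. by move=> h1 h2; apply: le_lt_trans (dU x y z) _; rewrite gt_max h1 h2. Qed.
Lemma dle x y z c : d x z <= c -> d z y <= c -> d x y <= c.
Proof. by move=> h1 h2; apply: le_trans (dU x y z) _; rewrite ge_max h1 h2. Qed.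
Lemma iso x y z : d x z < d x y -> d z y = d x y.
Proof.
move=> h; apply/eqP; rewrite eq_le; apply/andP; split.
  by apply: le_trans (dU z y x) _; rewrite ge_max dC ltW //=.
by have := dU x y z; rewrite le_max leNgt h /=.
Qed.

Lemma diam_ge (S : {set X}) x y : x \in S -> y \in S -> d x y <= diam d S.
Proof.
move=> xS yS; rewrite /diam.
apply: le_trans (le_bigmax_cond _ _ xS).
exact: (le_bigmax_cond _ _ yS).
Qed.

Lemma diam_leP (S : {set X}) m : reflect (0 <= m /\ forall x y, x \in S -> y \in S -> d x y <= m) (diam d S <= m).
Proof.
rewrite /diam; apply: (iffP (bigmax_leP _ _ _ _)) => [[h0 h]|[h0 h]]; split=> //.
  by move=> x y xS yS; have /bigmax_leP [_ ->] := h x xS.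
by move=> x xS; apply/bigmax_leP; split=> // y yS; apply: h.
Qed.

Lemma diam_ltP (S : {set X}) m : reflect (0 < m /\ forall x y, x \in S -> y \in S -> d x y < m) (diam d S < m).
Proof.
rewrite /diam; apply: (iffP (bigmax_ltP _ _ _ _)) => [[h0 h]|[h0 h]]; split=> //.
  by move=> x y xS yS; have /bigmax_ltP [_ ->] := h x xS.
by move=> x xS; apply/bigmax_ltP; split=> // y yS; apply: h.
Qed.

Lemma diam_att (S : {set X}) : (1 < #|S|)%N ->
  [/\ 0 < diam d S & exists2 a, a \in S & exists2 b, b \in S & (a != b) /\ d a b = diam d S].
Proof.
move=> /card_gt1P [u [v [uS vS uv]]].
have pos : 0 < diam d S by apply: lt_le_trans (dneq uv) (diam_ge uS vS).
split=> //.
have [a aS ha] := @eq_bigmax _ _ X 0 u (mem S)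
   (fun x => \big[Num.max/0]_(y in S) d x y) uS
   (fun i iS => le_trans (d0 i i) (le_bigmax_cond _ _ iS)).
have [b bS hb] := @eq_bigmax _ _ X 0 a (mem S) (fun y => d a y) aS
   (fun i iS => d0 a i).
exists a => //; exists b => //.
have e : d a b = diam d S by rewrite /diam ha /= hb.
split=> //; apply: contraTneq pos => ab; by rewrite -e ab dxx ltxx.
Qed.

Lemma node_ball S : rnode d S -> forall t, t \in S -> S = ball d (diam d S) t.
Proof.
elim => [|{}S C rS IH hS [x xS ->]] t.
  by move=> _; apply/setP => y; rewrite !inE diam_ge ?inE.
rewrite inE => /andP [tS xt].
have [pos _] := diam_att hS.
have hC : diam d [set y in S | d x y < diam d S] < diam d S.
  apply/diam_ltP; split=> // y z; rewrite !inE => /andP[_ h1] /andP[_ h2].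
  by apply: (dlt (z:=x)); rewrite // dC.
apply/setP=> y; rewrite !inE; apply/idP/idP.
  by case/andP => yS h; apply: diam_ge; rewrite inE ?yS ?tS ?h ?xt.
move=> h; have hyt : d y t < diam d S := le_lt_trans h hC.
have yS : y \in S by rewrite (IH t tS) inE ltW.
by rewrite yS /=; apply: (dlt (z:=t)) => //; rewrite dC.
Qed.

Lemma node_mem (S : {set X}) t y : rnode d S -> t \in S -> (y \in S) = (d y t <= diam d S).
Proof. by move=> rS tS; rewrite {1}(node_ball rS tS) inE. Qed.

Definition covers (S : {set X}) (L : seq R) :=
  forall y z, y \in S -> z \in S -> y != z -> d y z \in L.

Lemma removal (S : {set X}) p q0 L : p \in S -> q0 \in S -> q0 != p -> covers (S :\ p) L ->
  exists m, covers S (m :: L).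
Proof.
move=> pS q0S q0p cov.
have q0A : q0 \in S :\ p by rewrite !inE q0p.
case: (arg_minP (d p) q0A) => q qA qmin.
exists (d p q).
have help z : z \in S -> z != p -> d p z \in d p q :: L.
  move=> zS zp; rewrite in_cons; case: eqP => //= ne.
  have lt : d p q < d p z.
    rewrite lt_neqAle qmin ?andbT; last by apply/setD1P.
    by apply/eqP => e; apply: ne; rewrite e.
  have e := iso lt; case: (q =P z) => [qz|qz].
    by move: lt; rewrite qz ltxx.
  rewrite -e; apply: cov => //; last by apply/eqP.
  by rewrite !inE zp.
move=> y z yS zS yz.
case: (y =P p) => [yp|yp]; first by rewrite yp; apply: help => //; rewrite -yp eq_sym.
case: (z =P p) => [zp|zp]; first by rewrite zp dC; apply: help => //; apply/eqP.
by rewrite in_cons cov ?orbT // !inE; apply/andP; split => //; apply/eqP.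
Qed.

Lemma extend n : forall S T L, #|S :\: T| = n -> T \subset S -> (exists t, t \in T) ->
  covers T L -> exists L', (size L' <= size L + n)%N /\ covers S L'.
Proof.
elim: n => [|n IH] S T L hn sub [t tT] cov.
  exists L; split; first by rewrite addn0.
  have e : S :\: T = set0 by apply/eqP; rewrite -cards_eq0 hn.
  have ST y : y \in S -> y \in T.
    move=> yS; apply/negPn/negP => yT.
    have : y \in S :\: T by rewrite inE yT yS.
    by rewrite e inE.
  by move=> y z yS zS; apply: cov; apply: ST.
have : (0 < #|S :\: T|)%N by rewrite hn.
case/card_gt0P => p; rewrite inE => /andP [pT pS].
have e : (S :\ p) :\: T = (S :\: T) :\ p.
  by apply/setP => y; rewrite !inE; case: (y == p); case: (y \in T); case: (y \in S).
have hn' : #|(S :\ p) :\: T| = n.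
  by move: hn; rewrite e (cardsD1 p) inE pT pS add1n => -[].
have sub' : T \subset S :\ p.
  apply/subsetP => y yT; rewrite !inE (subsetP sub) // andbT.
  by apply: contraNneq pT => <-.
have [L' [hs cov']] := IH _ _ _ hn' sub' (ex_intro _ t tT) cov.
have tp : t != p by apply: contraNneq pT => <-.
have [m covS] := removal pS (subsetP sub _ tT) tp cov'.
by exists (m :: L'); split => //=; rewrite addnS ltnS.
Qed.

Lemma defect T L : inU d -> covers T L -> ((size L).+2 <= #|T|)%N -> False.
Proof.
move=> hu cov hT.
have [t tT] : exists t, t \in T.
  by apply/card_gt0P; apply: leq_ltn_trans hT.
have [L' [hs cov']] := extend (erefl _) (subsetT T) (ex_intro _ t tT) cov.
have sub : {subset Sp d <= L'}.
  move=> y; rewrite mem_undup => /mapP [[a b]]; rewrite mem_filter /= => /andP [ab _] ->.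
  by apply: cov'; rewrite ?inE.
have := uniq_leq_size (undup_uniq _) sub.
rewrite -/(Sp d) hu.
move: hs; rewrite setTD.
have := cardsC T.
have : (0 < #|T|)%N by apply/card_gt0P; exists t.
move=> h1 h2 h3 h4; move: h4; rewrite -h2; move: hT h3; move: (size L) (size L') #|T| #|~: T| => a b c e ? ? ?; lia.
Qed.

Lemma equilateral x y z : inU d -> x != y -> y != z -> x != z ->
  d x y = d y z -> d x z = d x y -> False.
Proof.
move=> hu xy yz xz e1 e2.
apply: (@defect [set x; y; z] [:: d x y] hu); last exact: card3.
move=> u v; rewrite -!setUA !inE => /or3P[]/eqP-> /or3P[]/eqP->; rewrite ?eqxx // => _;
  by apply/eqP; rewrite ?(dC y x) ?(dC z x) ?(dC z y); congruence.
Qed.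

Lemma inU_diam (U : {set X}) x t : inU d -> internal d U -> x != t -> d x t = diam d U -> t \in U.
Proof.
move=> hu [nU cU] xt hxt; apply/negPn/negP => tU.
have [pos [a aU [b bU [ab hab]]]] := diam_att cU.
have far y u : y \notin U -> u \in U -> diam d U < d y u.
  by move=> yU uU; move: yU; rewrite (node_mem y nU uU) -ltNge.
have xU : x \notin U.
  by apply/negP => xU; have := far t x tU xU; rewrite dC hxt ltxx.
have hat := far t a tU aU.
have hbt : d b t = d a t by apply: iso; rewrite hab dC.
have hxa : d x a = d t a by apply: iso; rewrite dC hxt; exact: far.
have hxb : d x b = d t b by apply: iso; rewrite dC hxt; exact: far.
have ax : a != x by apply: contraNneq xU => <-.
have at_ : a != t by apply: contraNneq tU => <-.
have bx : b != x by apply: contraNneq xU => <-.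
have bt : b != t by apply: contraNneq tU => <-.
apply: (@defect [set a; b; x; t] [:: diam d U; d t a] hu); last exact: card4.
have E1 : d b a = diam d U by rewrite dC.
have E2 : d t b = d t a by rewrite dC hbt dC.
have E3 : d a x = d t a by rewrite dC.
have E4 : d b x = d t a by rewrite dC hxb E2.
have E5 : d x b = d t a by rewrite hxb E2.
have E6 : d t x = diam d U by rewrite dC.
have E7 : d a t = d t a by rewrite dC.
move=> u v; rewrite -!setUA !inE => /or4P[]/eqP-> /or4P[]/eqP->; rewrite ?eqxx // => _;
  by rewrite ?hab ?E1 ?E2 ?E3 ?E4 ?E5 ?E6 ?hbt ?E7 ?hxa ?hxt ?eqxx ?orbT.
Qed.

Lemma same_diam U V : inU d -> internal d U -> internal d V -> diam d U = diam d V -> U = V.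
Proof.
move=> hu iU iV e.
have [_ [a aV [b bV [ab hab]]]] := diam_att iV.2.
have aU : a \in U by apply: (inU_diam (x:=b)) => //; [rewrite eq_sym | rewrite dC hab]; done.
by rewrite (node_ball iU.1 aU) (node_ball iV.1 aV) e.
Qed.

Lemma ballX_node B S : inU d -> internal d S -> ballX d B (diam d S) -> B = S.
Proof.
move=> hu iS [t [[x xt hx] ->]].
have tS := inU_diam hu iS xt hx.
by rewrite -(node_ball iS.1 tS).
Qed.



Lemma back U V W : inU d -> internal d U -> internal d V -> internal d W ->
  U != V -> U != W -> U = V :|: W -> is_class d U V.
Proof.
move=> hu iU iV iW UV UW e.
have sV : V \subset U by rewrite e subsetUl.
have sW : W \subset U by rewrite e subsetUr.
have [pos [a aU [b bU [ab hab]]]] := diam_att iU.2.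
have ltd (Y : {set X}) : internal d Y -> U != Y -> Y \subset U -> diam d Y < diam d U.
  move=> iY UY sY; rewrite lt_neqAle; apply/andP; split.
    by apply: contra UY => /eqP h; apply/eqP; apply: same_diam.
  apply/diam_leP; split; first exact: ltW.
  by move=> x y xY yY; apply: diam_ge; apply: (subsetP sY).
have ltV := ltd V iV UV sV.
have ltW' := ltd W iW UW sW.
have [x xV] : exists x, x \in V by apply/card_gt0P; apply: ltnW; exact: iV.2.
exists x; first exact: (subsetP sV).
apply/setP => y; rewrite inE; apply/idP/idP.
  move=> yV; rewrite (subsetP sV) //=.
  by apply: le_lt_trans ltV; apply: diam_ge.
case/andP => yU xy; apply/negPn/negP => yV.
have yW : y \in W by move: yU; rewrite e inE (negbTE yV).
have all u : u \in U -> d x u < diam d U.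
  move=> uU; have : u \in V :|: W by rewrite -e.
  rewrite inE => /orP [uV|uW].
    by apply: le_lt_trans ltV; apply: diam_ge.
  apply: (dlt (z:=y)) => //; apply: le_lt_trans ltW'; exact: diam_ge.
have : d a b < diam d U by apply: (dlt (z:=x)); [rewrite dC; exact: all | exact: all].
by rewrite hab ltxx.
Qed.

End S.

Theorem lemma23 (R : realType) (X : finType) (d : X -> X -> R) :
  ultrametric d -> inU d ->
  forall U V W : {set X},
    internal d U -> internal d V -> internal d W ->
    U != V -> U != W -> V != W ->
  forall Bu Bv Bw : {set X},
    ballX d Bu (diam d U) -> ballX d Bv (diam d V) -> ballX d Bw (diam d W) ->
    (child d U V /\ child d U W <-> Bu = Bv :|: Bw).
Proof.
move=> hU hu U V W iU iV iW UV UW VW Bu Bv Bw hBu hBv hBw.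
rewrite (ballX_node hU hu iU hBu) (ballX_node hU hu iV hBv) (ballX_node hU hu iW hBw).
split; last first.
  move=> e; split; split=> //; first exact: (back hU hu iU iV iW).
  by apply: (back hU hu iU iW iV) => //; rewrite setUC.
move=> [[_ [x xU eV]] [_ [y yU eW]]].
have [pos _] := diam_att hU iU.2.
have sV : V \subset U by rewrite eV; apply/subsetP => z; rewrite inE => /andP[].
have sW : W \subset U by rewrite eW; apply/subsetP => z; rewrite inE => /andP[].
apply/setP => z; rewrite inE; apply/idP/idP; last first.
  by case/orP; [apply: (subsetP sV) | apply: (subsetP sW)].
move=> zU; apply/negPn/negP; rewrite negb_or => /andP [zV zW].
move: zV zW; rewrite eV eW !inE zU /= -!leNgt => hxz hyz.
have hxy : diam d U <= d x y.
  rewrite leNgt; apply/negP => lt; move/eqP: VW; apply.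
  rewrite eV eW; apply/setP => w; rewrite !inE; case: (w \in U) => //=.
  apply/idP/idP => h.
    by apply: (@dlt _ _ _ hU y w x) => //; rewrite dC.
  exact: (@dlt _ _ _ hU x w y).
have exy : d x y = diam d U by apply/eqP; rewrite eq_le hxy diam_ge.
have exz : d x z = diam d U by apply/eqP; rewrite eq_le hxz diam_ge.
have eyz : d y z = diam d U by apply/eqP; rewrite eq_le hyz diam_ge.
have ne u v : d u v = diam d U -> u != v.
  by move=> h; apply/eqP => uv; move: pos; rewrite -h uv (dxx hU) ltxx.
apply: (equilateral hU hu (ne _ _ exy) (ne _ _ eyz) (ne _ _ exz)); congruence.
Qed.
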